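(* Let $(M,\mathcal{X})\models\mathrm{RCA}_0$, let $\mathcal{U}$ be an ultrafilter on the Boolean algebra $\mathcal{X}$ all of whose elements are cofinal in $M$, and let $\mathcal{F}/\mathcal{U}$ be the (first-order part of the) second-order restricted ultrapower. If $(M,\mathcal{X})$ satisfies $\Sigma_n$-comprehension for some $n\in\mathbb{N}$, then $M\preccurlyeq_{\Sigma_{n+2}}\mathcal{F}/\mathcal{U}$, i.e. every first-order $\Sigma_{n+2}$ formula with parameters from $M$ has the same truth value in $M$ and in $\mathcal{F}/\mathcal{U}$.
   Context: $\mathrm{RCA}_0$ is the second-order system with Robinson arithmetic, $\Sigma^0_1$-induction and $\Delta^0_1$-comprehension. $(M,\mathcal{X})$ satisfies $\Sigma_n$-comprehension if every subset of $M$ defined by a first-order $\Sigma_n$ formula with parameters from $M$ belongs to $\mathcal{X}$. Second-order restricted ultrapower: let $\mathcal{F}$ be the set of all total functions $M\to M$ belonging to $\mathcal{X}$; for $f,g\in\mathcal{F}$ put $f\sim g$ iff $\{i\in M: f(i)=g(i)\}\in\mathcal{U}$; $\mathcal{F}/\mathcal{U}$ is the set of classes $[f]$, with $[f]+[g]=[f+g]$, $[f]\times[g]=[f\times g]$ (pointwise), $[f]<[g]$ iff $\{i: f(i)<g(i)\}\in\mathcal{U}$. $M$ embeds into $\mathcal{F}/\mathcal{U}$ via constant functions. *)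

(* Defs.v *)
(** * Syntax: the language {0, 1, +, x, <, =} of arithmetic, plus the
    second-order atomic formula [t \in X_k] (set variables indexed by nat).
    Number variables are de Bruijn indices. *)

Inductive term : Type :=
  | Var : nat -> term
  | Zero : term
  | One : term
  | Plus : term -> term -> term
  | Times : term -> term -> term.

Inductive form : Type :=
  | Eq : term -> term -> form
  | Lt : term -> term -> form
  | Mem : term -> nat -> form
  | Not : form -> form
  | And : form -> form -> form
  | Or : form -> form -> form
  | Imp : form -> form -> form
  | Ex : form -> form
  | All : form -> form
  | BEx : term -> form -> form          (* exists x < t  (t in the outer context) *)
  | BAll : term -> form -> form.        (* forall x < t  (t in the outer context) *)

Fixpoint first_order (phi : form) : Prop :=
  match phi with
  | Eq _ _ | Lt _ _ => True
  | Mem _ _ => False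
  | Not p => first_order p
  | And p q | Or p q | Imp p q => first_order p /\ first_order q
  | Ex p | All p | BEx _ p | BAll _ p => first_order p
  end.

Inductive delta0 : form -> Prop :=
  | d0_eq s t : delta0 (Eq s t)
  | d0_lt s t : delta0 (Lt s t)
  | d0_mem t k : delta0 (Mem t k)
  | d0_not p : delta0 p -> delta0 (Not p)
  | d0_and p q : delta0 p -> delta0 q -> delta0 (And p q)
  | d0_or p q : delta0 p -> delta0 q -> delta0 (Or p q)
  | d0_imp p q : delta0 p -> delta0 q -> delta0 (Imp p q)
  | d0_bex t p : delta0 p -> delta0 (BEx t p)
  | d0_ball t p : delta0 p -> delta0 (BAll t p).

Inductive is_sigma : nat -> form -> Prop :=
  | sig_0 p : delta0 p -> is_sigma 0 p
  | sig_pi n p : is_pi n p -> is_sigma (S n) p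
  | sig_ex n p : is_sigma (S n) p -> is_sigma (S n) (Ex p)
with is_pi : nat -> form -> Prop :=
  | pi_0 p : delta0 p -> is_pi 0 p
  | pi_sig n p : is_sigma n p -> is_pi (S n) p
  | pi_all n p : is_pi (S n) p -> is_pi (S n) (All p).

(** A structure has a carrier [dom], a domain predicate [inD] (the range of
    the quantifiers), an interpretation [eqS] of the equality symbol, and
    interpretations of 0, 1, +, x, <. *)
Record Lstruct : Type := {
  dom : Type;
  inD : dom -> Prop;
  eqS : dom -> dom -> Prop;
  zeroS : dom;
  oneS : dom;
  addS : dom -> dom -> dom;
  mulS : dom -> dom -> dom;
  ltS : dom -> dom -> Prop
}.

Definition scons {A : Type} (x : A) (e : nat -> A) : nat -> A :=
  fun k => match k with 0 => x | S k' => e k' end.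

Fixpoint teval (S : Lstruct) (e : nat -> dom S) (t : term) : dom S :=
  match t with
  | Var k => e k
  | Zero => zeroS S
  | One => oneS S
  | Plus a b => addS S (teval S e a) (teval S e b)
  | Times a b => mulS S (teval S e a) (teval S e b)
  end.

Fixpoint sat (S : Lstruct) (sets : nat -> dom S -> Prop) (e : nat -> dom S)
    (phi : form) : Prop :=
  match phi with
  | Eq a b => eqS S (teval S e a) (teval S e b)
  | Lt a b => ltS S (teval S e a) (teval S e b)
  | Mem a k => sets k (teval S e a)
  | Not p => ~ sat S sets e p
  | And p q => sat S sets e p /\ sat S sets e q
  | Or p q => sat S sets e p \/ sat S sets e q
  | Imp p q => sat S sets e p -> sat S sets e q
  | Ex p => exists x, inD S x /\ sat S sets (scons x e) p
  | All p => forall x, inD S x -> sat S sets (scons x e) p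
  | BEx t p => exists x, inD S x /\ ltS S x (teval S e t) /\ sat S sets (scons x e) p
  | BAll t p => forall x, inD S x -> ltS S x (teval S e t) -> sat S sets (scons x e) p
  end.

Definition nosets {D : Type} : nat -> D -> Prop := fun _ _ => False.

Record model2 : Type := {
  carr : Type;
  zero : carr;
  one : carr;
  add : carr -> carr -> carr;
  mul : carr -> carr -> carr;
  lt : carr -> carr -> Prop;
  X : (carr -> Prop) -> Prop
}.

Definition fo_part (M : model2) : Lstruct :=
  {| dom := carr M; inD := fun _ => True; eqS := @eq (carr M);
     zeroS := zero M; oneS := one M; addS := add M; mulS := mul M; ltS := lt M |}.

Definition Q_axioms (M : model2) : Prop :=
  (forall x, add M x (one M) <> zero M) /\
  (forall x y, add M x (one M) = add M y (one M) -> x = y) /\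
  (forall x, x <> zero M -> exists y, x = add M y (one M)) /\
  (forall x, add M x (zero M) = x) /\
  (forall x y, add M x (add M y (one M)) = add M (add M x y) (one M)) /\
  (forall x, mul M x (zero M) = zero M) /\
  (forall x y, mul M x (add M y (one M)) = add M (mul M x y) x) /\
  (forall x y, lt M x y <-> exists z, add M x (add M z (one M)) = y).

Definition sets_in_X (M : model2) (sets : nat -> carr M -> Prop) : Prop :=
  forall k, X M (sets k).

Definition Sigma01_induction (M : model2) : Prop :=
  forall phi, is_sigma 1 phi ->
  forall (sets : nat -> carr M -> Prop) (e : nat -> carr M), sets_in_X M sets ->
    sat (fo_part M) sets (scons (zero M) e) phi ->
    (forall x, sat (fo_part M) sets (scons x e) phi ->
               sat (fo_part M) sets (scons (add M x (one M)) e) phi) ->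
    forall x, sat (fo_part M) sets (scons x e) phi.

Definition Delta01_comprehension (M : model2) : Prop :=
  forall phi psi, is_sigma 1 phi -> is_pi 1 psi ->
  forall (sets : nat -> carr M -> Prop) (e : nat -> carr M), sets_in_X M sets ->
    (forall x, sat (fo_part M) sets (scons x e) phi <->
               sat (fo_part M) sets (scons x e) psi) ->
    X M (fun x => sat (fo_part M) sets (scons x e) phi).

Definition RCA0 (M : model2) : Prop :=
  Q_axioms M /\ Sigma01_induction M /\ Delta01_comprehension M.

Definition Sigma_n_comprehension (M : model2) (n : nat) : Prop :=
  forall phi, first_order phi -> is_sigma n phi ->
  forall e : nat -> carr M, X M (fun x => sat (fo_part M) nosets (scons x e) phi).

Definition ultrafilter_on (M : model2) (U : (carr M -> Prop) -> Prop) : Prop :=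
  (forall A, U A -> X M A) /\
  U (fun _ => True) /\
  ~ U (fun _ => False) /\
  (forall A B, U A -> U B -> U (fun x => A x /\ B x)) /\
  (forall A B, U A -> X M B -> (forall x, A x -> B x) -> U B) /\
  (forall A, X M A -> U A \/ U (fun x => ~ A x)).

Definition cofinal (M : model2) (A : carr M -> Prop) : Prop :=
  forall m, exists a, A a /\ lt M m a.

(** Cantor pairing as a relation: z = <x, y>  iff  2z = (x+y)(x+y+1) + 2x. *)
Definition pair_rel (M : model2) (z x y : carr M) : Prop :=
  add M z z = add M (mul M (add M x y) (add M (add M x y) (one M))) (add M x x).

Definition fun_in_X (M : model2) (f : carr M -> carr M) : Prop :=
  X M (fun z => exists i, pair_rel M z i (f i)).

(** The second-order restricted ultrapower F/U: elements are functions in X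
    (domain predicate [fun_in_X]), equality is U-a.e. equality (so the
    structure is F/U presented before quotienting by ~), operations are
    pointwise, and [f] < [g] iff {i | f i < g i} in U. *)
Definition restricted_ultrapower (M : model2) (U : (carr M -> Prop) -> Prop)
    : Lstruct :=
  {| dom := carr M -> carr M;
     inD := fun_in_X M;
     eqS := fun f g => U (fun i => f i = g i);
     zeroS := fun _ => zero M;
     oneS := fun _ => one M;
     addS := fun f g i => add M (f i) (g i);
     mulS := fun f g i => mul M (f i) (g i);
     ltS := fun f g => U (fun i => lt M (f i) (g i)) |}.

Definition const_fun (M : model2) (m : carr M) : carr M -> carr M := fun _ => m.

(* Main.v *)
Require Import Defs.
From Stdlib Require Import Arith Ring Lia Classical FunctionalExtensionality PropExtensionality IndefiniteDescription.

Fixpoint trename (s : nat -> nat) (t : term) : term :=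
  match t with
  | Var k => Var (s k)
  | Zero => Zero | One => One
  | Plus a b => Plus (trename s a) (trename s b)
  | Times a b => Times (trename s a) (trename s b)
  end.

Definition up (s : nat -> nat) : nat -> nat :=
  fun k => match k with 0 => 0 | S k => S (s k) end.

Fixpoint rename (s : nat -> nat) (p : form) : form :=
  match p with
  | Eq a b => Eq (trename s a) (trename s b)
  | Lt a b => Lt (trename s a) (trename s b)
  | Mem a k => Mem (trename s a) k
  | Not p => Not (rename s p)
  | And p q => And (rename s p) (rename s q)
  | Or p q => Or (rename s p) (rename s q)
  | Imp p q => Imp (rename s p) (rename s q)
  | Ex p => Ex (rename (up s) p)
  | All p => All (rename (up s) p)
  | BEx t p => BEx (trename s t) (rename (up s) p)
  | BAll t p => BAll (trename s t) (rename (up s) p)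
  end.

Lemma teval_rename S rho s t :
  teval S rho (trename s t) = teval S (fun k => rho (s k)) t.
Proof. induction t; simpl; congruence. Qed.

Lemma scons_up {A} (x : A) rho s :
  (fun k => scons x rho (up s k)) = scons x (fun k => rho (s k)).
Proof. apply functional_extensionality; intros [|k]; reflexivity. Qed.

Lemma sat_rename S sets p : forall rho s,
  sat S sets rho (rename s p) <-> sat S sets (fun k => rho (s k)) p.
Proof.
  induction p; intros rho s; simpl; rewrite ?teval_rename;
  try (rewrite ?IHp, ?IHp1, ?IHp2; tauto).
  - split; intros [x [H1 H2]]; exists x; split; auto;
    [rewrite IHp in H2; rewrite <- scons_up; exact H2 |
     rewrite IHp; rewrite scons_up; exact H2].
  - split; intros H x Hx; specialize (H x Hx);
    [rewrite IHp in H; rewrite <- scons_up; exact H |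
     rewrite IHp; rewrite scons_up; exact H].
  - split; intros [x [H1 [H2 H3]]]; exists x; repeat split; auto;
    [rewrite IHp in H3; rewrite <- scons_up; exact H3 |
     rewrite IHp; rewrite scons_up; exact H3].
  - split; intros H x Hx Hl; specialize (H x Hx Hl);
    [rewrite IHp in H; rewrite <- scons_up; exact H |
     rewrite IHp; rewrite scons_up; exact H].
Qed.

Lemma rename_fo s p : first_order p -> first_order (rename s p).
Proof. revert s; induction p; simpl; intros; intuition. Qed.

Lemma rename_d0 s p : delta0 p -> delta0 (rename s p).
Proof. intros H; revert s; induction H; intros; simpl; constructor; auto. Qed.

Lemma rename_sig : forall n p, is_sigma n p -> forall s, is_sigma n (rename s p)
with rename_pi : forall n p, is_pi n p -> forall s, is_pi n (rename s p).
Proof.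
  - intros n p H; destruct H; intros s.
    + apply sig_0, rename_d0; auto.
    + apply sig_pi, rename_pi; auto.
    + simpl; apply sig_ex, rename_sig; auto.
  - intros n p H; destruct H; intros s.
    + apply pi_0, rename_d0; auto.
    + apply pi_sig, rename_sig; auto.
    + simpl; apply pi_all, rename_pi; auto.
Qed.

Definition PRf (z x y : term) : form :=
  Eq (Plus z z) (Plus (Times (Plus x y) (Plus (Plus x y) One)) (Plus x x)).
Lemma d0_PRf a b c : delta0 (PRf a b c).
Proof. constructor. Qed.
Lemma fo_PRf a b c : first_order (PRf a b c).
Proof. simpl; auto. Qed.

Definition lift (t : form) : form := rename S t.

Fixpoint push_and (t : form) (p : form) : form :=
  match p with
  | Ex q => Ex (push_and (lift t) q)
  | All q => All (push_and (lift t) q)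
  | _ => And t p
  end.
Fixpoint push_imp (t : form) (p : form) : form :=
  match p with
  | Ex q => Ex (push_imp (lift t) q)
  | All q => All (push_imp (lift t) q)
  | _ => Imp t p
  end.

Lemma push_and_d0 t p : delta0 p -> push_and t p = And t p.
Proof. intro H; destruct H; reflexivity. Qed.
Lemma push_imp_d0 t p : delta0 p -> push_imp t p = Imp t p.
Proof. intro H; destruct H; reflexivity. Qed.

Lemma push_and_sig : forall k p, is_sigma k p -> forall t, delta0 t -> is_sigma k (push_and t p)
with push_and_pi : forall k p, is_pi k p -> forall t, delta0 t -> is_pi k (push_and t p).
Proof.
  - intros k p H; destruct H; intros t Ht.
    + rewrite push_and_d0 by auto. apply sig_0; constructor; auto.
    + apply sig_pi, push_and_pi; auto.
    + simpl; apply sig_ex, push_and_sig; auto. apply rename_d0; auto.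
  - intros k p H; destruct H; intros t Ht.
    + rewrite push_and_d0 by auto. apply pi_0; constructor; auto.
    + apply pi_sig, push_and_sig; auto.
    + simpl; apply pi_all, push_and_pi; auto. apply rename_d0; auto.
Qed.

Lemma push_imp_sig : forall k p, is_sigma k p -> forall t, delta0 t -> is_sigma k (push_imp t p)
with push_imp_pi : forall k p, is_pi k p -> forall t, delta0 t -> is_pi k (push_imp t p).
Proof.
  - intros k p H; destruct H; intros t Ht.
    + rewrite push_imp_d0 by auto. apply sig_0; constructor; auto.
    + apply sig_pi, push_imp_pi; auto.
    + simpl; apply sig_ex, push_imp_sig; auto. apply rename_d0; auto.
  - intros k p H; destruct H; intros t Ht.
    + rewrite push_imp_d0 by auto. apply pi_0; constructor; auto.
    + apply pi_sig, push_imp_sig; auto.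
    + simpl; apply pi_all, push_imp_pi; auto. apply rename_d0; auto.
Qed.

Lemma push_and_fo p : forall t, first_order t -> first_order p -> first_order (push_and t p).
Proof.
  induction p; intros th Ht Hp; simpl in *; try tauto;
  apply IHp; auto; apply rename_fo; auto.
Qed.
Lemma push_imp_fo p : forall t, first_order t -> first_order p -> first_order (push_imp t p).
Proof.
  induction p; intros th Ht Hp; simpl in *; try tauto;
  apply IHp; auto; apply rename_fo; auto.
Qed.

Definition sgs (d k : nat) : nat :=
  if Nat.ltb k d then S (S k) else if Nat.eqb k d then 1 else if Nat.eqb k (S d) then 0 else S k.
Definition insS (d k : nat) : nat := if Nat.ltb k d then k else S k.

Definition Usp (b : bool) (d : nat) (p : form) : form :=
  if b then Ex (Ex (push_and (PRf (Var (S (S d))) (Var 1) (Var 0)) (rename (sgs d) p)))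
  else All (All (push_imp (PRf (Var (S (S d))) (Var 1) (Var 0)) (rename (sgs d) p))).

Inductive op := OS (d : nat) | OI (d : nat).
Definition fop (b : bool) (o : op) (p : form) : form :=
  match o with OS d => Usp b d p | OI d => rename (insS d) p end.
Definition trans (b : bool) (os : list op) (p : form) : form := List.fold_right (fop b) p os.

Lemma trans_sig k os p : is_sigma (S k) p -> is_sigma (S k) (trans true os p).
Proof.
  induction os as [|o os IH]; simpl; auto. intro H; specialize (IH H).
  destruct o; simpl.
  - apply sig_ex, sig_ex, push_and_sig; [apply rename_sig; auto| apply d0_PRf].
  - apply rename_sig; auto.
Qed.
Lemma trans_pi k os p : is_pi (S k) p -> is_pi (S k) (trans false os p).
Proof.
  induction os as [|o os IH]; simpl; auto. intro H; specialize (IH H).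
  destruct o; simpl.
  - apply pi_all, pi_all, push_imp_pi; [apply rename_pi; auto| apply d0_PRf].
  - apply rename_pi; auto.
Qed.
Lemma trans_fo b os p : first_order p -> first_order (trans b os p).
Proof.
  induction os as [|o os IH]; simpl; auto. intro H; specialize (IH H).
  destruct o, b; simpl.
  - apply push_and_fo; [apply fo_PRf | apply rename_fo; auto].
  - apply push_imp_fo; [apply fo_PRf | apply rename_fo; auto].
  - apply rename_fo; auto.
  - apply rename_fo; auto.
Qed.

Lemma sat_fo_sets S p : first_order p -> forall s1 s2 rho,
  sat S s1 rho p <-> sat S s2 rho p.
Proof.
  induction p; simpl; intros Hp s1 s2.
  all: try (intro; reflexivity).
  - contradiction.
  - specialize (IHp Hp s1 s2); setoid_rewrite IHp; reflexivity.
  - destruct Hp as [H1 H2]; specialize (IHp1 H1 s1 s2); specialize (IHp2 H2 s1 s2);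
    setoid_rewrite IHp1; setoid_rewrite IHp2; reflexivity.
  - destruct Hp as [H1 H2]; specialize (IHp1 H1 s1 s2); specialize (IHp2 H2 s1 s2);
    setoid_rewrite IHp1; setoid_rewrite IHp2; reflexivity.
  - destruct Hp as [H1 H2]; specialize (IHp1 H1 s1 s2); specialize (IHp2 H2 s1 s2);
    setoid_rewrite IHp1; setoid_rewrite IHp2; reflexivity.
  - specialize (IHp Hp s1 s2); setoid_rewrite IHp; reflexivity.
  - specialize (IHp Hp s1 s2); setoid_rewrite IHp; reflexivity.
  - specialize (IHp Hp s1 s2); setoid_rewrite IHp; reflexivity.
  - specialize (IHp Hp s1 s2); setoid_rewrite IHp; reflexivity.
Qed.

Lemma sat_lift S s rho x t : sat S s (scons x rho) (lift t) <-> sat S s rho t.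
Proof. unfold lift; rewrite sat_rename; reflexivity. Qed.

Lemma sig_S : forall k p, is_sigma k p -> is_sigma (S k) p
with pi_S : forall k p, is_pi k p -> is_pi (S k) p.
Proof.
  - intros k p H; destruct H.
    + apply sig_pi, pi_0; auto.
    + apply sig_pi, pi_S; auto.
    + apply sig_ex, sig_S; auto.
  - intros k p H; destruct H.
    + apply pi_sig, sig_0; auto.
    + apply pi_sig, sig_S; auto.
    + apply pi_all, pi_S; auto.
Qed.

Lemma sig_le k m p : k <= m -> is_sigma k p -> is_sigma m p.
Proof. induction 1; auto. intro; apply sig_S; auto. Qed.

Lemma d0_sig k p : delta0 p -> is_sigma k p.
Proof. intro H; apply (sig_le 0); [lia| apply sig_0; auto]. Qed.

Lemma inv_q n : forall p,
  (is_sigma n (Ex p) -> is_sigma n p) /\ (is_pi n (Ex p) -> is_sigma n p) /\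
  (is_sigma n (All p) -> is_sigma n p) /\ (is_pi n (All p) -> is_pi n p).
Proof.
  induction n as [|m IH]; intro p.
  - repeat split; intro H; inversion H; subst;
      match goal with H : delta0 _ |- _ => inversion H end.
  - destruct (IH p) as [I1 [I2 [I3 I4]]]. repeat split; intro H; inversion H; subst; auto.
    + apply sig_S; auto.
    + apply sig_S; auto.
    + apply sig_pi; auto.
    + apply pi_sig; auto.
Qed.

Lemma nonq n : forall f, (forall p, f <> Ex p) -> (forall p, f <> All p) ->
  (is_sigma n f -> delta0 f) /\ (is_pi n f -> delta0 f).
Proof.
  induction n as [|m IH]; intros f H1 H2.
  - split; intro H; inversion H; auto.
  - destruct (IH f H1 H2) as [I1 I2]. split; intro H; inversion H; subst; auto;
      solve [exfalso; eapply H1; eauto | exfalso; eapply H2; eauto].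
Qed.

Lemma sig_nonEx k f : is_sigma (S k) f -> (forall p, f <> Ex p) -> is_pi k f.
Proof. intros H H1; inversion H; subst; auto. exfalso; eapply H1; eauto. Qed.
Lemma pi_nonAll k f : is_pi (S k) f -> (forall p, f <> All p) -> is_sigma k f.
Proof. intros H H1; inversion H; subst; auto. exfalso; eapply H1; eauto. Qed.

Fixpoint Allm (m : nat) (c : form) : form :=
  match m with 0 => c | S m => Allm m (All c) end.
Lemma Allm_All m : forall c, Allm m (All c) = All (Allm m c).
Proof. induction m; intro c; simpl; auto. Qed.
Lemma fo_Allm m : forall c, first_order (Allm m c) -> first_order c.
Proof. induction m; intros c H; simpl in *; auto. apply IHm in H; simpl in H; auto. Qed.

Lemma pi_decomp k f : is_pi (S k) f -> exists m c, f = Allm m c /\ is_sigma k c.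
Proof.
  induction f; intro H;
    try (exists 0; eexists; split; [reflexivity| apply pi_nonAll; auto; intros p Hp; discriminate]).
  match goal with IH : is_pi _ ?p -> _, H : is_pi _ (All ?p) |- _ =>
    destruct (inv_q (S k) p) as [_ [_ [_ I4]]]; destruct (IH (I4 H)) as [m [c [E Hc]]];
    exists (S m), c; split; auto; simpl; rewrite Allm_All, E; auto end.
Qed.

Lemma sat_BEx S s rho t p :
  sat S s rho (BEx t p) <-> sat S s rho (Ex (And (Lt (Var 0) (trename Datatypes.S t)) p)).
Proof. simpl. setoid_rewrite teval_rename. simpl. firstorder. Qed.
Lemma sat_BAll S s rho t p :
  sat S s rho (BAll t p) <-> sat S s rho (All (Imp (Lt (Var 0) (trename Datatypes.S t)) p)).
Proof. simpl. setoid_rewrite teval_rename. simpl. firstorder. Qed.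

Lemma d0_of n f : is_sigma n f -> (forall p, f <> Ex p) -> (forall p, f <> All p) -> delta0 f.
Proof. intros H H1 H2; apply (proj1 (nonq n f H1 H2)); auto. Qed.



Section Arith.
Variable M : model2.
Hypothesis HQ : Q_axioms M.
Hypothesis HI : Sigma01_induction M.
Hypothesis HD : Delta01_comprehension M.
Hypothesis HT : X M (fun _ => True).

Local Notation "a ⊕ b" := (add M a b) (at level 50, left associativity).
Local Notation "a ⊗ b" := (mul M a b) (at level 40, left associativity).
Local Notation "𝟙" := (one M).
Local Notation "𝟘" := (zero M).

Definition Tsets : nat -> carr M -> Prop := fun _ _ => True.

Lemma indMs (phi : form) sets (e : nat -> carr M) (P : carr M -> Prop) :
  is_sigma 1 phi -> sets_in_X M sets ->
  (forall x, sat (fo_part M) sets (scons x e) phi <-> P x) ->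
  P 𝟘 -> (forall x, P x -> P (x ⊕ 𝟙)) -> forall x, P x.
Proof.
  intros Hs HX HP H0 HS x. apply HP.
  apply (HI phi Hs sets e HX); [apply HP; exact H0|].
  intros y Hy; apply HP; apply HS; apply HP; exact Hy.
Qed.

Lemma indM (phi : form) (e : nat -> carr M) (P : carr M -> Prop) :
  is_sigma 1 phi ->
  (forall x, sat (fo_part M) Tsets (scons x e) phi <-> P x) ->
  P 𝟘 -> (forall x, P x -> P (x ⊕ 𝟙)) -> forall x, P x.
Proof. intros; eapply indMs; eauto. intro; exact HT. Qed.

Ltac indm phi e := match goal with |- forall x, @?P x => apply (indM phi e P) end.
Ltac d0t := repeat first [apply d0_PRf | constructor].
Ltac sig1 := repeat apply sig_ex; apply sig_pi, pi_0; d0t.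
Ltac pi1 := repeat apply pi_all; apply pi_sig, sig_0; d0t.

Let q1 : forall x, x ⊕ 𝟙 <> 𝟘. Proof. apply HQ. Qed.
Let q2 : forall x y, x ⊕ 𝟙 = y ⊕ 𝟙 -> x = y. Proof. apply HQ. Qed.
Let q3 : forall x, x <> 𝟘 -> exists y, x = y ⊕ 𝟙. Proof. apply HQ. Qed.
Let q4 : forall x, x ⊕ 𝟘 = x. Proof. apply HQ. Qed.
Let q5 : forall x y, x ⊕ (y ⊕ 𝟙) = (x ⊕ y) ⊕ 𝟙. Proof. apply HQ. Qed.
Let q6 : forall x, x ⊗ 𝟘 = 𝟘. Proof. apply HQ. Qed.
Let q7 : forall x y, x ⊗ (y ⊕ 𝟙) = x ⊗ y ⊕ x. Proof. apply HQ. Qed.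
Let q8 : forall x y, lt M x y <-> exists z, x ⊕ (z ⊕ 𝟙) = y. Proof. apply HQ. Qed.

Lemma add0l x : 𝟘 ⊕ x = x.
Proof.
  revert x; indm (Eq (Plus Zero (Var 0)) (Var 0)) (fun _ : nat => 𝟘); [sig1| intro; simpl; tauto | |].
  - apply q4.
  - intros x H; rewrite q5, H; reflexivity.
Qed.

Lemma addSl y x : (y ⊕ 𝟙) ⊕ x = (y ⊕ x) ⊕ 𝟙.
Proof.
  revert x; indm (Eq (Plus (Plus (Var 1) One) (Var 0)) (Plus (Plus (Var 1) (Var 0)) One)) (fun _ : nat => y);
    [sig1| intro; simpl; tauto | |].
  - rewrite !q4; reflexivity.
  - intros x H; rewrite !q5, H; reflexivity.
Qed.

Lemma addC x y : x ⊕ y = y ⊕ x.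
Proof.
  revert x; indm (Eq (Plus (Var 0) (Var 1)) (Plus (Var 1) (Var 0))) (fun _ : nat => y);
    [sig1| intro; simpl; tauto | |].
  - rewrite add0l, q4; reflexivity.
  - intros x H; rewrite addSl, q5, H; reflexivity.
Qed.

Lemma addA x y z : (x ⊕ y) ⊕ z = x ⊕ (y ⊕ z).
Proof.
  revert z; indm (Eq (Plus (Plus (Var 1) (Var 2)) (Var 0)) (Plus (Var 1) (Plus (Var 2) (Var 0))))
    (scons x (fun _ : nat => y)); [sig1| intro; simpl; tauto | |].
  - rewrite !q4; reflexivity.
  - intros z H; rewrite !q5, H; reflexivity.
Qed.

Lemma mul0l x : 𝟘 ⊗ x = 𝟘.
Proof.
  revert x; indm (Eq (Times Zero (Var 0)) Zero) (fun _ : nat => 𝟘); [sig1| intro; simpl; tauto | |].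
  - apply q6.
  - intros x H; rewrite q7, H, q4; reflexivity.
Qed.

Lemma mulDr x y z : x ⊗ (y ⊕ z) = x ⊗ y ⊕ x ⊗ z.
Proof.
  revert z; indm (Eq (Times (Var 1) (Plus (Var 2) (Var 0))) (Plus (Times (Var 1) (Var 2)) (Times (Var 1) (Var 0))))
    (scons x (fun _ : nat => y)); [sig1| intro; simpl; tauto | |].
  - rewrite q4, q6, q4; reflexivity.
  - intros z H; rewrite q5, !q7, H, addA; reflexivity.
Qed.

Lemma mulSl x y : (x ⊕ 𝟙) ⊗ y = x ⊗ y ⊕ y.
Proof.
  revert y; indm (Eq (Times (Plus (Var 1) One) (Var 0)) (Plus (Times (Var 1) (Var 0)) (Var 0)))
    (fun _ : nat => x); [sig1| intro; simpl; tauto | |].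
  - rewrite !q6, q4; reflexivity.
  - intros y H; rewrite !q7, H, !addA. f_equal.
    rewrite !q5, (addC x y); reflexivity.
Qed.

Lemma mulC x y : x ⊗ y = y ⊗ x.
Proof.
  revert y; indm (Eq (Times (Var 1) (Var 0)) (Times (Var 0) (Var 1)))
    (fun _ : nat => x); [sig1| intro; simpl; tauto | |].
  - rewrite q6, mul0l; reflexivity.
  - intros y H; rewrite q7, mulSl, H; reflexivity.
Qed.

Lemma mulA x y z : (x ⊗ y) ⊗ z = x ⊗ (y ⊗ z).
Proof.
  revert z; indm (Eq (Times (Times (Var 1) (Var 2)) (Var 0)) (Times (Var 1) (Times (Var 2) (Var 0))))
    (scons x (fun _ : nat => y)); [sig1| intro; simpl; tauto | |].
  - rewrite !q6; reflexivity.
  - intros z H; rewrite !q7, H, mulDr; reflexivity.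
Qed.

Lemma mul1l x : 𝟙 ⊗ x = x.
Proof.
  rewrite mulC. rewrite <- (add0l 𝟙) at 1. rewrite q7, q6, add0l; reflexivity.
Qed.

Lemma M_srt : semi_ring_theory 𝟘 𝟙 (add M) (mul M) (@eq (carr M)).
Proof.
  constructor.
  - apply add0l.
  - apply addC.
  - intros; symmetry; apply addA.
  - apply mul1l.
  - apply mul0l.
  - apply mulC.
  - intros; symmetry; apply mulA.
  - intros; rewrite mulC, mulDr, (mulC p), (mulC p); reflexivity.
Qed.

Add Ring Mring : M_srt.

Lemma test x y : (x ⊕ y) ⊗ (x ⊕ y) = x ⊗ x ⊕ 𝟙 ⊗ x ⊗ y ⊕ y ⊗ x ⊕ y ⊗ y.
Proof. ring. Qed.


Lemma cancel_r a b c : a ⊕ c = b ⊕ c -> a = b.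
Proof.
  revert c; indm (Imp (Eq (Plus (Var 1) (Var 0)) (Plus (Var 2) (Var 0))) (Eq (Var 1) (Var 2)))
    (scons a (fun _ : nat => b)); [sig1| intro; simpl; tauto | |].
  - rewrite !q4; auto.
  - intros c H E; apply H, q2; rewrite <- !q5; exact E.
Qed.

Lemma cancel_l a b c : c ⊕ a = c ⊕ b -> a = b.
Proof. rewrite (addC c a), (addC c b); apply cancel_r. Qed.

Lemma neq_succ a b K : b = a ⊕ (K ⊕ 𝟙) -> a = b -> False.
Proof.
  intros H1 H2; rewrite <- H2 in H1. apply (q1 K). apply (cancel_l _ _ a). rewrite q4. symmetry; exact H1.
Qed.

Lemma trich a b : a = b \/ (exists d, b = a ⊕ (d ⊕ 𝟙)) \/ (exists d, a = b ⊕ (d ⊕ 𝟙)).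
Proof.
  assert (H : forall a, exists d, a = b \/ b = a ⊕ (d ⊕ 𝟙) \/ a = b ⊕ (d ⊕ 𝟙)).
  { indm (Ex (Or (Eq (Var 1) (Var 2)) (Or (Eq (Var 2) (Plus (Var 1) (Plus (Var 0) One)))
        (Eq (Var 1) (Plus (Var 2) (Plus (Var 0) One)))))) (fun _ : nat => b); [sig1| intro; simpl; split; [intros [d [_ H]]; exists d; exact H | intros [d H]; exists d; split; [exact I | exact H]] | |].
    - destruct (classic (b = 𝟘)) as [E|E].
      + exists 𝟘; left; auto.
      + destruct (q3 _ E) as [y Hy]; exists y; right; left; rewrite Hy; ring.
    - intros x [d [H|[H|H]]].
      + exists 𝟘; right; right; subst; ring.
      + destruct (classic (d = 𝟘)) as [E|E].
        * exists 𝟘; left; subst; ring.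
        * destruct (q3 _ E) as [y Hy]; exists y; right; left; subst; ring.
      + exists (d ⊕ 𝟙); right; right; subst; ring. }
  destruct (H a) as [d [E|[E|E]]]; [left; auto | right; left; eauto | right; right; eauto].
Qed.

Lemma lt_def a b : lt M a b <-> exists d, b = a ⊕ (d ⊕ 𝟙).
Proof. rewrite q8; split; intros [d H]; exists d; auto. Qed.

Lemma not_lt0 a : ~ lt M a 𝟘.
Proof. rewrite lt_def; intros [d H]. apply (q1 (a ⊕ d)). rewrite <- q5; auto. Qed.

Lemma lt_S y x : lt M y (x ⊕ 𝟙) -> lt M y x \/ y = x.
Proof.
  rewrite !lt_def; intros [d H]. rewrite q5 in H; apply q2 in H.
  destruct (classic (d = 𝟘)) as [E|E].
  - right; subst; ring.
  - destruct (q3 _ E) as [z Hz]; left; exists z; subst; ring.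
Qed.

Lemma lt_succ x : lt M x (x ⊕ 𝟙).
Proof. rewrite lt_def; exists 𝟘; ring. Qed.

Lemma lt_irr x : ~ lt M x x.
Proof. rewrite lt_def; intros [d H]. eapply neq_succ; eauto. Qed.

Lemma lt_asym x y : lt M x y -> lt M y x -> False.
Proof.
  rewrite !lt_def; intros [d H] [d' H']. subst y.
  apply (neq_succ x x (d ⊕ d' ⊕ 𝟙)); [|reflexivity]. rewrite H' at 1; ring.
Qed.

Lemma LNP (A : carr M -> Prop) : X M A -> (exists y, A y) ->
  exists y, A y /\ forall y', lt M y' y -> ~ A y'.
Proof.
  intros HA [y0 Hy0]. apply NNPP; intro Hn.
  assert (H : forall x y, lt M y x -> ~ A y).
  { match goal with |- forall x, @?P x => apply (indMs (BAll (Var 0) (Not (Mem (Var 0) 0))) (fun _ : nat => A) (fun _ : nat => 𝟘) P) end;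
      [sig1| intro; exact HA | intro; simpl; split; [intros H y Hy; exact (H y I Hy) | intros H y _ Hy; exact (H y Hy)] | |].
    - intros y H; exfalso; eapply not_lt0; eauto.
    - intros x IH y Hy Ay. destruct (lt_S _ _ Hy) as [H|H]; [eapply IH; eauto|].
      subst y. apply Hn; exists x; split; auto. }
  eapply H; [apply lt_succ | exact Hy0].
Qed.

Lemma even_ex s : exists t, s ⊗ (s ⊕ 𝟙) = t ⊕ t.
Proof.
  revert s; indm (Ex (Eq (Times (Var 1) (Plus (Var 1) One)) (Plus (Var 0) (Var 0)))) (fun _ : nat => 𝟘);
    [sig1| intro; simpl; split; [intros [d [_ H]]; exists d; exact H | intros [d H]; exists d; split; [exact I | exact H]] | |].
  - exists 𝟘; ring.
  - intros s [t H]. exists (t ⊕ s ⊕ 𝟙).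
    transitivity (s ⊗ (s ⊕ 𝟙) ⊕ (s ⊕ 𝟙) ⊕ (s ⊕ 𝟙)); [ring|]. rewrite H; ring.
Qed.

Lemma pr_ex x y : exists z, pair_rel M z x y.
Proof.
  destruct (even_ex (x ⊕ y)) as [t H]. exists (t ⊕ x). unfold pair_rel. rewrite H. ring.
Qed.

Lemma halve a b : a ⊕ a = b ⊕ b -> a = b.
Proof.
  intro H. destruct (trich a b) as [E|[[d E]|[d E]]]; auto; exfalso; subst.
  - apply (neq_succ (a ⊕ a) ((a ⊕ (d ⊕ 𝟙)) ⊕ (a ⊕ (d ⊕ 𝟙))) (d ⊕ d ⊕ 𝟙)); auto; ring.
  - apply (neq_succ (b ⊕ b) ((b ⊕ (d ⊕ 𝟙)) ⊕ (b ⊕ (d ⊕ 𝟙))) (d ⊕ d ⊕ 𝟙)); auto; ring.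
Qed.

Lemma pr_fun c c' x y : pair_rel M c x y -> pair_rel M c' x y -> c = c'.
Proof. unfold pair_rel; intros H H'; apply halve; congruence. Qed.

Lemma pr_inj c x y x' y' : pair_rel M c x y -> pair_rel M c x' y' -> x = x' /\ y = y'.
Proof.
  unfold pair_rel; intros H H'.
  destruct (trich (x ⊕ y) (x' ⊕ y')) as [E|[[d E]|[d E]]].
  - rewrite <- E in H'. rewrite H' in H. apply cancel_l in H. apply halve in H. subst x'.
    split; auto. eapply cancel_l; eauto.
  - exfalso. rewrite E in H'.
    apply (neq_succ (c ⊕ c) (c ⊕ c)
      ((x ⊕ y) ⊗ d ⊕ (x ⊕ y) ⊗ d ⊕ y ⊕ y ⊕ d ⊗ d ⊕ d ⊕ d ⊕ d ⊕ 𝟙 ⊕ x' ⊕ x')); auto.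
    rewrite H' at 1. rewrite H. ring.
  - exfalso. rewrite E in H.
    apply (neq_succ (c ⊕ c) (c ⊕ c)
      ((x' ⊕ y') ⊗ d ⊕ (x' ⊕ y') ⊗ d ⊕ y' ⊕ y' ⊕ d ⊗ d ⊕ d ⊕ d ⊕ d ⊕ 𝟙 ⊕ x ⊕ x)); auto.
    rewrite H at 1. rewrite H'. ring.
Qed.

Lemma pr_surj c : exists x y, pair_rel M c x y.
Proof.
  revert c; indm (Ex (Ex (Eq (Plus (Var 2) (Var 2))
     (Plus (Times (Plus (Var 1) (Var 0)) (Plus (Plus (Var 1) (Var 0)) One)) (Plus (Var 1) (Var 1))))))
     (fun _ : nat => 𝟘); [sig1| intro; simpl; unfold pair_rel; split; [intros [a [_ [b [_ H]]]]; exists a, b; exact H | intros [a [b H]]; exists a; split; [exact I|]; exists b; split; [exact I | exact H]] | |].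
  - exists 𝟘, 𝟘; unfold pair_rel; ring.
  - intros c [x [y H]]; unfold pair_rel in *.
    destruct (classic (y = 𝟘)) as [E|E].
    + subst y. exists 𝟘, (x ⊕ 𝟙).
      transitivity (c ⊕ c ⊕ 𝟙 ⊕ 𝟙); [ring|]. rewrite H; ring.
    + destruct (q3 _ E) as [y' Hy]; subst y. exists (x ⊕ 𝟙), y'.
      transitivity (c ⊕ c ⊕ 𝟙 ⊕ 𝟙); [ring|]. rewrite H; ring.
Qed.

Lemma pr_mono2 w w' i y y' : pair_rel M w' i y' -> pair_rel M w i y -> lt M y' y -> lt M w' w.
Proof.
  unfold pair_rel; intros H' H Hl. apply lt_def in Hl; destruct Hl as [d Hd]; subst y.
  set (K := (i ⊕ y') ⊗ d ⊕ (i ⊕ y') ⊗ d ⊕ (i ⊕ y') ⊕ (i ⊕ y') ⊕ d ⊗ d ⊕ d ⊕ d ⊕ d ⊕ 𝟙).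
  assert (E : w ⊕ w = (w' ⊕ w') ⊕ (K ⊕ 𝟙)) by (rewrite H, H'; unfold K; ring).
  apply lt_def. destruct (trich w' w) as [E'|[[d' E']|[d' E']]].
  - exfalso; subst w'. eapply neq_succ; eauto.
  - eauto.
  - exfalso; subst w'. apply (neq_succ (w ⊕ w) (w ⊕ w) (d' ⊕ d' ⊕ 𝟙 ⊕ 𝟙 ⊕ K)); [|reflexivity].
    rewrite E at 1. unfold K. ring.
Qed.

Definition pr (x y : carr M) : carr M :=
  proj1_sig (constructive_indefinite_description _ (pr_ex x y)).
Lemma pr_spec x y : pair_rel M (pr x y) x y.
Proof. unfold pr; destruct constructive_indefinite_description; auto. Qed.

Lemma surj2 c : exists p : carr M * carr M, pair_rel M c (fst p) (snd p).
Proof. destruct (pr_surj c) as [x [y H]]; exists (x, y); auto. Qed.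
Definition dc (c : carr M) : carr M * carr M :=
  proj1_sig (constructive_indefinite_description _ (surj2 c)).
Definition p1 c := fst (dc c).
Definition p2 c := snd (dc c).
Lemma p12_spec c : pair_rel M c (p1 c) (p2 c).
Proof. unfold p1, p2, dc; destruct constructive_indefinite_description; auto. Qed.

Lemma pr_rel c x y : pair_rel M c x y <-> c = pr x y.
Proof.
  split; intro H.
  - eapply pr_fun; eauto using pr_spec.
  - subst; apply pr_spec.
Qed.
Lemma p1_pr x y : p1 (pr x y) = x.
Proof. destruct (pr_inj _ _ _ _ _ (p12_spec (pr x y)) (pr_spec x y)); auto. Qed.
Lemma p2_pr x y : p2 (pr x y) = y.
Proof. destruct (pr_inj _ _ _ _ _ (p12_spec (pr x y)) (pr_spec x y)); auto. Qed.
Lemma pr_p12 c : pr (p1 c) (p2 c) = c.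
Proof. symmetry; apply pr_rel, p12_spec. Qed.
Lemma pr_rel' c x y : pair_rel M c x y <-> x = p1 c /\ y = p2 c.
Proof.
  rewrite pr_rel; split.
  - intros ->; rewrite p1_pr, p2_pr; auto.
  - intros [-> ->]; symmetry; apply pr_p12.
Qed.

Lemma compX (phi psi : form) sets (e : nat -> carr M) (P : carr M -> Prop) :
  is_sigma 1 phi -> is_pi 1 psi -> sets_in_X M sets ->
  (forall x, sat (fo_part M) sets (scons x e) phi <-> P x) ->
  (forall x, sat (fo_part M) sets (scons x e) psi <-> P x) -> X M P.
Proof.
  intros H1 H2 HX E1 E2.
  assert (HP : P = fun x => sat (fo_part M) sets (scons x e) phi).
  { apply functional_extensionality; intro x; apply propositional_extensionality; rewrite E1; tauto. }
  rewrite HP. apply HD with psi; auto. intro x; rewrite E1, E2; tauto.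
Qed.

Definition sets2 (A B : carr M -> Prop) : nat -> carr M -> Prop :=
  fun k => match k with 0 => A | _ => B end.
Definition sets3 (A B C : carr M -> Prop) : nat -> carr M -> Prop :=
  fun k => match k with 0 => A | 1 => B | _ => C end.
Lemma sets2_X A B : X M A -> X M B -> sets_in_X M (sets2 A B).
Proof. intros HA HB [|k]; simpl; auto. Qed.
Lemma sets3_X A B C : X M A -> X M B -> X M C -> sets_in_X M (sets3 A B C).
Proof. intros HA HB HC [|[|k]]; simpl; auto. Qed.


Ltac foldpr := repeat match goal with |- context [add M ?z ?z = add M (mul M (add M ?x ?y) (add M (add M ?x ?y) (one M))) (add M ?x ?x)] =>
  change (add M z z = add M (mul M (add M x y) (add M (add M x y) (one M))) (add M x x)) with (pair_rel M z x y) end.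

Definition inX (f : carr M -> carr M) : Prop := fun_in_X M f.
Definition graph (f : carr M -> carr M) : carr M -> Prop := fun z => exists i, pair_rel M z i (f i).

Lemma graph_iff f z : graph f z <-> exists i, z = pr i (f i).
Proof. unfold graph; split; intros [i H]; exists i; apply pr_rel; auto. Qed.
Lemma graph_val f z i y : graph f z -> pair_rel M z i y -> y = f i.
Proof.
  intros [i' H'] H. destruct (pr_inj _ _ _ _ _ H H'); subst; auto.
Qed.
Lemma graph_in f i : graph f (pr i (f i)).
Proof. exists i; apply pr_spec. Qed.

Lemma X_compl A : X M A -> X M (fun x => ~ A x).
Proof.
  intro HA. apply (compX (Not (Mem (Var 0) 0)) (Not (Mem (Var 0) 0)) (sets2 A A) (fun _ : nat => 𝟘));
    [sig1|pi1|apply sets2_X; auto| intro; simpl; tauto | intro; simpl; tauto].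
Qed.

Lemma X_preim S W : X M S -> inX W -> X M (fun i => S (W i)).
Proof.
  intros HS HW.
  apply (compX
    (Ex (Ex (And (Mem (Var 1) 0) (And (PRf (Var 1) (Var 2) (Var 0)) (Mem (Var 0) 1)))))
    (All (All (Imp (And (Mem (Var 1) 0) (PRf (Var 1) (Var 2) (Var 0))) (Mem (Var 0) 1))))
    (sets2 (graph W) S) (fun _ : nat => 𝟘)); [sig1|pi1|apply sets2_X; auto| |].
  - intro i; simpl; foldpr. split.
    + intros [z [_ [y [_ [Hz [Hp Hy]]]]]]. rewrite <- (graph_val W z i y Hz Hp); auto.
    + intros H. exists (pr i (W i)); split; [exact I|]. exists (W i); split; [exact I|].
      split; [apply graph_in|split; [apply pr_spec|auto]].
  - intro i; simpl; foldpr. split.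
    + intros H. apply (H (pr i (W i)) I (W i) I); split; [apply graph_in|apply pr_spec].
    + intros H z _ y _ [Hz Hp]. rewrite (graph_val W z i y Hz Hp); auto.
Qed.

Lemma sat_PRf sets rho a b c :
  sat (fo_part M) sets rho (PRf a b c) <->
  pair_rel M (teval (fo_part M) rho a) (teval (fo_part M) rho b) (teval (fo_part M) rho c).
Proof. reflexivity. Qed.
Opaque PRf.

Lemma graph_iff2 f z : graph f z <-> p2 z = f (p1 z).
Proof.
  rewrite graph_iff; split.
  - intros [i ->]; rewrite p1_pr, p2_pr; auto.
  - intros H; exists (p1 z); rewrite <- H; symmetry; apply pr_p12.
Qed.

Ltac satsimp := simpl; setoid_rewrite sat_PRf; simpl; setoid_rewrite pr_rel';
  try setoid_rewrite graph_iff2.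

Lemma X_graph f (phi psi : form) sets (e : nat -> carr M) :
  is_sigma 1 phi -> is_pi 1 psi -> sets_in_X M sets ->
  (forall x, sat (fo_part M) sets (scons x e) phi <-> p2 x = f (p1 x)) ->
  (forall x, sat (fo_part M) sets (scons x e) psi <-> p2 x = f (p1 x)) -> inX f.
Proof.
  intros H1 H2 H3 E1 E2. unfold inX, fun_in_X. apply (compX phi psi sets e); auto.
  - intro x; rewrite E1; fold (graph f x); rewrite graph_iff2; tauto.
  - intro x; rewrite E2; fold (graph f x); rewrite graph_iff2; tauto.
Qed.

Lemma TX : sets_in_X M Tsets.
Proof. intro; exact HT. Qed.

Lemma X_const m : inX (fun _ => m).
Proof.
  apply (X_graph _ (Ex (Ex (And (PRf (Var 2) (Var 1) (Var 0)) (Eq (Var 0) (Var 3)))))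
    (All (All (Imp (PRf (Var 2) (Var 1) (Var 0)) (Eq (Var 0) (Var 3))))) Tsets (scons m (fun _ : nat => 𝟘)));
    [| |apply TX| |]; [sig1|pi1| |]; intro z; satsimp; split.
  - intros [i [_ [y [_ [[-> ->] ->]]]]]; reflexivity.
  - intros H; exists (p1 z); split; [exact I|]; exists (p2 z); split; [exact I|]; auto.
  - intros H; apply (H (p1 z) I (p2 z) I); auto.
  - intros H i _ y _ [-> ->]; auto.
Qed.

Lemma X_id : inX (fun i => i).
Proof.
  apply (X_graph _ (Ex (PRf (Var 1) (Var 0) (Var 0)))
    (All (All (Imp (PRf (Var 2) (Var 1) (Var 0)) (Eq (Var 1) (Var 0))))) Tsets (fun _ : nat => 𝟘));
    [| |apply TX| |]; [sig1|pi1| |]; intro z; satsimp; split.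
  - intros [i [_ [-> ->]]]; reflexivity.
  - intros H; exists (p1 z); split; [exact I|]; auto.
  - intros H; symmetry; apply (H (p1 z) I (p2 z) I); auto.
  - intros H i _ y _ [-> ->]; auto.
Qed.

Lemma X_p1 W : inX W -> inX (fun i => p1 (W i)).
Proof.
  intro HW.
  apply (X_graph _
   (Ex (Ex (Ex (Ex (Ex (And (PRf (Var 5) (Var 4) (Var 3)) (And (Mem (Var 2) 0)
       (And (PRf (Var 2) (Var 4) (Var 1)) (PRf (Var 1) (Var 3) (Var 0))))))))))
   (All (All (All (All (All (All (Imp (And (PRf (Var 6) (Var 5) (Var 4)) (And (PRf (Var 3) (Var 5) (Var 2))
       (PRf (Var 2) (Var 1) (Var 0)))) (Imp (Mem (Var 3) 0) (Eq (Var 4) (Var 1))))))))))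
   (sets2 (graph W) (graph W)) (fun _ : nat => 𝟘)); [| |apply sets2_X; auto| |]; [sig1|pi1| |];
   intro z; satsimp; split.
  - intros [i [_ [a [_ [u [_ [c [_ [b [_ [[Hi Ha] [Hu [[Hi' Hc] [Ha' Hb]]]]]]]]]]]]]]; congruence.
  - intros H. exists (p1 z); split; [exact I|]. exists (p2 z); split; [exact I|].
    exists (pr (p1 z) (W (p1 z))); split; [exact I|]. exists (W (p1 z)); split; [exact I|].
    exists (p2 (W (p1 z))); split; [exact I|]. rewrite !p1_pr, !p2_pr. auto 10.
  - intros H. apply (H (p1 z) I (p2 z) I (pr (p1 z) (W (p1 z))) I (W (p1 z)) I (p1 (W (p1 z))) I (p2 (W (p1 z))) I);
      rewrite ?p1_pr, ?p2_pr; auto 10.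
  - intros H i _ a _ u _ c _ b1 _ b2 _ [[Hi Ha] [[Hi' Hc] [Hb1 Hb2]]] Hu; congruence.
Qed.

Lemma X_p2 W : inX W -> inX (fun i => p2 (W i)).
Proof.
  intro HW.
  apply (X_graph _
   (Ex (Ex (Ex (Ex (Ex (And (PRf (Var 5) (Var 4) (Var 3)) (And (Mem (Var 2) 0)
       (And (PRf (Var 2) (Var 4) (Var 1)) (PRf (Var 1) (Var 0) (Var 3))))))))))
   (All (All (All (All (All (All (Imp (And (PRf (Var 6) (Var 5) (Var 4)) (And (PRf (Var 3) (Var 5) (Var 2))
       (PRf (Var 2) (Var 1) (Var 0)))) (Imp (Mem (Var 3) 0) (Eq (Var 4) (Var 0))))))))))
   (sets2 (graph W) (graph W)) (fun _ : nat => 𝟘)); [| |apply sets2_X; auto| |]; [sig1|pi1| |];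
   intro z; satsimp; split.
  - intros [i [_ [a [_ [u [_ [c [_ [b [_ [[Hi Ha] [Hu [[Hi' Hc] [Ha' Hb]]]]]]]]]]]]]]; congruence.
  - intros H. exists (p1 z); split; [exact I|]. exists (p2 z); split; [exact I|].
    exists (pr (p1 z) (W (p1 z))); split; [exact I|]. exists (W (p1 z)); split; [exact I|].
    exists (p1 (W (p1 z))); split; [exact I|]. rewrite !p1_pr, !p2_pr. auto 10.
  - intros H. apply (H (p1 z) I (p2 z) I (pr (p1 z) (W (p1 z))) I (W (p1 z)) I (p1 (W (p1 z))) I (p2 (W (p1 z))) I);
      rewrite ?p1_pr, ?p2_pr; auto 10.
  - intros H i _ a _ u _ c _ b1 _ b2 _ [[Hi Ha] [[Hi' Hc] [Hb1 Hb2]]] Hu; congruence.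
Qed.

Lemma X_pair f g : inX f -> inX g -> inX (fun i => pr (f i) (g i)).
Proof.
  intros Hf Hg.
  apply (X_graph _
   (Ex (Ex (Ex (Ex (Ex (Ex (And (PRf (Var 6) (Var 5) (Var 4)) (And (PRf (Var 4) (Var 3) (Var 2))
      (And (Mem (Var 1) 0) (And (PRf (Var 1) (Var 5) (Var 3)) (And (Mem (Var 0) 1) (PRf (Var 0) (Var 5) (Var 2)))))))))))))
   (All (All (All (All (All (All (Imp (And (PRf (Var 6) (Var 5) (Var 4)) (And (PRf (Var 4) (Var 3) (Var 2))
      (And (PRf (Var 1) (Var 5) (Var 3)) (PRf (Var 0) (Var 5) (Var 2))))) (And (Mem (Var 1) 0) (Mem (Var 0) 1)))))))))
   (sets2 (graph f) (graph g)) (fun _ : nat => 𝟘)); [| |apply sets2_X; auto| |]; [sig1|pi1| |];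
   intro z; satsimp; split.
  - intros [i [_ [c [_ [a [_ [b [_ [u [_ [v [_ [[Hi Hc] [[Ha Hb] [Hu [[Hi1 Ha1] [Hv [Hi2 Hb2]]]]]]]]]]]]]]]]]].
    pose proof (pr_p12 c). congruence.
  - intros H. set (i := p1 z). exists i; split; [exact I|]. exists (p2 z); split; [exact I|].
    exists (f i); split; [exact I|]. exists (g i); split; [exact I|].
    exists (pr i (f i)); split; [exact I|]. exists (pr i (g i)); split; [exact I|].
    rewrite H, !p1_pr, !p2_pr. auto 20.
  - intros H. set (i := p1 z). set (c := p2 z).
    destruct (H i I c I (p1 c) I (p2 c) I (pr i (p1 c)) I (pr i (p2 c)) I) as [Hu Hv];
      rewrite ?p1_pr, ?p2_pr; auto 10.
    rewrite !p1_pr, !p2_pr in Hu. rewrite !p1_pr, !p2_pr in Hv. rewrite <- Hu, <- Hv. symmetry; apply pr_p12.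
  - intros H i _ c _ a _ b _ u _ v _ [[Hi Hc] [[Ha Hb] [[Hi1 Ha1] [Hi2 Hb2]]]].
    rewrite H in Hc. subst. rewrite p1_pr in Ha1; rewrite p2_pr in Hb2. rewrite <- Hi1, <- Hi2, <- Ha1, <- Hb2; auto.
Qed.

Lemma X_slice Q i : X M Q -> X M (fun y => Q (pr i y)).
Proof.
  intro HQ'.
  apply (compX (Ex (And (PRf (Var 0) (Var 2) (Var 1)) (Mem (Var 0) 0)))
    (All (Imp (PRf (Var 0) (Var 2) (Var 1)) (Mem (Var 0) 0))) (sets2 Q Q) (scons i (fun _ : nat => 𝟘)));
    [| |apply sets2_X; auto| |]; [sig1|pi1| |]; intro y; satsimp; split.
  - intros [w [_ [[Hi Hy] Hw]]]. rewrite <- (pr_p12 w), <- Hi, <- Hy in Hw; auto.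
  - intros H; exists (pr i y); split; [exact I|]. rewrite p1_pr, p2_pr; auto.
  - intros H; apply (H (pr i y) I); rewrite p1_pr, p2_pr; auto.
  - intros H w _ [Hi Hy]. rewrite <- (pr_p12 w), <- Hi, <- Hy; auto.
Qed.

Lemma X_Q A R W : X M A -> X M R -> inX W ->
  X M (fun z => ~ A (p1 z) \/ R (pr (p2 z) (W (p1 z)))).
Proof.
  intros HA HR HW.
  apply (compX
    (Ex (Ex (Ex (Ex (Ex (And (PRf (Var 5) (Var 4) (Var 3)) (And (Mem (Var 2) 2) (And (PRf (Var 2) (Var 4) (Var 1))
      (And (PRf (Var 0) (Var 3) (Var 1)) (Or (Not (Mem (Var 4) 0)) (Mem (Var 0) 1)))))))))))
    (All (All (All (All (All (Imp (And (PRf (Var 5) (Var 4) (Var 3)) (And (Mem (Var 2) 2) (And (PRf (Var 2) (Var 4) (Var 1))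
      (PRf (Var 0) (Var 3) (Var 1))))) (Or (Not (Mem (Var 4) 0)) (Mem (Var 0) 1))))))))
    (sets3 A R (graph W)) (fun _ : nat => 𝟘)); [| |apply sets3_X; auto| |]; [sig1|pi1| |];
    intro z; satsimp; split.
  - intros [i [_ [y [_ [u [_ [a [_ [w [_ [[Hi Hy] [Hu [[Hi1 Ha] [[Hy1 Ha1] Hor]]]]]]]]]]]]]].
    assert (Ew : w = pr (p2 z) (W (p1 z))) by (rewrite <- (pr_p12 w); congruence).
    rewrite <- Ew; congruence.
  - intros H. set (i := p1 z). set (y := p2 z).
    exists i; split; [exact I|]. exists y; split; [exact I|].
    exists (pr i (W i)); split; [exact I|]. exists (W i); split; [exact I|].
    exists (pr y (W i)); split; [exact I|]. rewrite !p1_pr, !p2_pr. auto 10.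
  - intros H. set (i := p1 z). set (y := p2 z).
    apply (H i I y I (pr i (W i)) I (W i) I (pr y (W i)) I). rewrite !p1_pr, !p2_pr. auto 10.
  - intros H i _ y _ u _ a _ w _ [[Hi Hy] [Hu [[Hi1 Ha] [Hy1 Ha1]]]].
    assert (Ew : w = pr (p2 z) (W (p1 z))) by (rewrite <- (pr_p12 w); congruence).
    rewrite Ew; congruence.
Qed.

Lemma skolem_core Q : X M Q -> (forall i, exists y, Q (pr i y)) ->
  exists h, inX h /\ forall i, Q (pr i (h i)).
Proof.
  intros HQ' Hex.
  set (Min := fun i y => Q (pr i y) /\ forall y', lt M y' y -> ~ Q (pr i y')).
  assert (Hm : forall i, exists y, Min i y) by (intro i; apply LNP; [apply X_slice; auto | auto]).
  assert (Hu : forall i y y', Min i y -> Min i y' -> y = y').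
  { intros i y y' [H1 H2] [H1' H2']. destruct (trich y y') as [E|[[d E]|[d E]]]; auto; exfalso.
    - apply (H2' y); auto. apply lt_def; eauto.
    - apply (H2 y'); auto. apply lt_def; eauto. }
  set (h := fun i => proj1_sig (constructive_indefinite_description _ (Hm i))).
  assert (Hh : forall i, Min i (h i)) by (intro i; unfold h; destruct constructive_indefinite_description; auto).
  assert (Key : forall z, (Q z /\ forall y' w, lt M y' (p2 z) -> lt M w z -> p1 z = p1 w -> y' = p2 w -> ~ Q w)
                  <-> p2 z = h (p1 z)).
  { intro z. split.
    - intros [Hz Hmin]. apply (Hu (p1 z)); [|apply Hh]. split; [rewrite pr_p12; auto|].
      intros y' Hl Hq. apply (Hmin y' (pr (p1 z) y')); auto; rewrite ?p1_pr, ?p2_pr; auto.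
      rewrite <- (pr_p12 z) at 2. apply (pr_mono2 _ _ (p1 z) (p2 z) y'); auto using pr_spec.
    - intros E. destruct (Hh (p1 z)) as [H1 H2]. rewrite <- E, pr_p12 in H1. split; auto.
      intros y' w Hl _ Hi Hy Hw. apply (H2 y'); [rewrite <- E; auto|].
      rewrite Hi, Hy, pr_p12; auto. }
  exists h; split; [|intro i; apply Hh].
  apply (X_graph _
    (Ex (Ex (And (PRf (Var 2) (Var 1) (Var 0)) (And (Mem (Var 2) 0)
       (BAll (Var 0) (BAll (Var 3) (Imp (PRf (Var 0) (Var 3) (Var 1)) (Not (Mem (Var 0) 0)))))))))
    (All (All (Imp (PRf (Var 2) (Var 1) (Var 0)) (And (Mem (Var 2) 0)
       (BAll (Var 0) (BAll (Var 3) (Imp (PRf (Var 0) (Var 3) (Var 1)) (Not (Mem (Var 0) 0)))))))))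
    (sets2 Q Q) (fun _ : nat => 𝟘)); [| |apply sets2_X; auto| |]; [sig1|pi1| |];
    intro z; satsimp; rewrite <- Key; split.
  - intros [i [_ [y [_ [[Hi Hy] [Hz Hb]]]]]]. split; auto. rewrite Hi, Hy in Hb.
    intros y' w Hl Hw Hi' Hy'. apply (Hb y' I Hl w I Hw); auto.
  - intros [Hz Hb]. exists (p1 z); split; [exact I|]. exists (p2 z); split; [exact I|].
    split; [auto|]. split; auto. intros y' _ Hl w _ Hw [Hi Hy]. apply (Hb y' w); auto.
  - intros H. destruct (H (p1 z) I (p2 z) I (conj eq_refl eq_refl)) as [Hz Hb]. split; auto.
    intros y' w Hl Hw Hi Hy. apply (Hb y' I Hl w I Hw); auto.
  - intros [Hz Hb] i _ y _ [Hi Hy]. rewrite Hi, Hy. split; auto.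
    intros y' _ Hl w _ Hw [Hi' Hy']. apply (Hb y' w); auto.
Qed.

Lemma skolem A R W : X M A -> X M R -> inX W ->
  (forall i, A i -> exists y, R (pr y (W i))) ->
  exists h, inX h /\ forall i, A i -> R (pr (h i) (W i)).
Proof.
  intros HA HR HW Hex.
  destruct (skolem_core _ (X_Q A R W HA HR HW)) as [h [Hh1 Hh2]].
  - intro i. destruct (classic (A i)) as [Ai|Ai].
    + destruct (Hex i Ai) as [y Hy]; exists y; rewrite p1_pr, p2_pr; auto.
    + exists 𝟘; rewrite p1_pr; auto.
  - exists h; split; auto. intros i Ai. destruct (Hh2 i) as [H|H]; rewrite ?p1_pr, ?p2_pr in H; tauto.
Qed.

Lemma sat_push_and s p : forall th rho,
  sat (fo_part M) s rho (push_and th p) <-> sat (fo_part M) s rho th /\ sat (fo_part M) s rho p.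
Proof.
  induction p; intros th rho; simpl; try reflexivity.
  - setoid_rewrite IHp. setoid_rewrite sat_lift. split.
    + intros [x [_ [H1 H2]]]; split; auto; exists x; auto.
    + intros [H1 [x [_ H2]]]; exists x; auto.
  - setoid_rewrite IHp. setoid_rewrite sat_lift. split.
    + intros H; split; [apply (H 𝟘 I)|]; intros x _; apply (H x I).
    + intros [H1 H2] x _; split; auto.
Qed.

Lemma sat_push_imp s p : forall th rho,
  sat (fo_part M) s rho (push_imp th p) <-> (sat (fo_part M) s rho th -> sat (fo_part M) s rho p).
Proof.
  induction p; intros th rho; simpl; try reflexivity.
  - setoid_rewrite IHp. setoid_rewrite sat_lift. split.
    + intros [x [_ H1]] Ht; exists x; auto.
    + intros H. destruct (classic (sat (fo_part M) s rho th)) as [Ht|Ht].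
      * destruct (H Ht) as [x [_ Hx]]; exists x; auto.
      * exists 𝟘; split; auto; intro; contradiction.
  - setoid_rewrite IHp. setoid_rewrite sat_lift. split.
    + intros H Ht x _; apply (H x I Ht).
    + intros H x _ Ht; apply (H Ht x I).
Qed.

Definition splitE (d : nat) (rho : nat -> carr M) : nat -> carr M := fun k =>
  if Nat.ltb k d then rho k else if Nat.eqb k d then p1 (rho d)
  else if Nat.eqb k (S d) then p2 (rho d) else rho (pred k).

Lemma env_split d rho :
  (fun k => scons (p2 (rho d)) (scons (p1 (rho d)) rho) (sgs d k)) = splitE d rho.
Proof.
  apply functional_extensionality; intro k; unfold sgs, splitE.
  destruct (Nat.ltb_spec k d); [reflexivity|].
  destruct (Nat.eqb_spec k d); [subst; reflexivity|].
  destruct (Nat.eqb_spec k (S d)); [subst; reflexivity|].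
  destruct k; [lia|reflexivity].
Qed.

Lemma sat_Usp s b d p rho :
  sat (fo_part M) s rho (Usp b d p) <-> sat (fo_part M) s (splitE d rho) p.
Proof.
  destruct b; simpl; setoid_rewrite sat_push_and || setoid_rewrite sat_push_imp;
    setoid_rewrite sat_PRf; setoid_rewrite sat_rename; simpl; setoid_rewrite pr_rel'.
  - split.
    + intros [a [_ [b [_ [[Ha Hb] H]]]]]. subst a b. rewrite <- env_split; auto.
    + intros H. exists (p1 (rho d)); split; [exact I|]. exists (p2 (rho d)); split; [exact I|].
      split; auto. rewrite env_split; auto.
  - split.
    + intros H. rewrite <- env_split. apply (H _ I _ I); auto.
    + intros H a _ b _ [Ha Hb]. subst a b. rewrite env_split; auto.
Qed.

Definition envop (o : op) (rho : nat -> carr M) : nat -> carr M :=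
  match o with OS d => splitE d rho | OI d => fun k => rho (insS d k) end.
Fixpoint envT (os : list op) (rho : nat -> carr M) : nat -> carr M :=
  match os with nil => rho | cons o os => envT os (envop o rho) end.

Lemma sat_trans s b os : forall p rho,
  sat (fo_part M) s rho (trans b os p) <-> sat (fo_part M) s (envT os rho) p.
Proof.
  induction os as [|o os IH]; intros p rho; simpl; [reflexivity|].
  destruct o; simpl.
  - rewrite sat_Usp. apply IH.
  - rewrite sat_rename. apply IH.
Qed.

Fixpoint dec (N : nat) (c : carr M) (e : nat -> carr M) : nat -> carr M :=
  match N with 0 => e | S N => scons (p1 c) (dec N (p2 c) e) end.

Fixpoint tops (N d : nat) : list op :=
  match N with 0 => cons (OI d) nil | S N => cons (OS d) (tops N (S d)) end.

Definition dsplit (N d : nat) (rho : nat -> carr M) : nat -> carr M := fun k =>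
  if Nat.ltb k d then rho k else dec N (rho d) (fun j => rho (S (d + j))) (k - d).

Lemma splitE_lt d rho k : k < d -> splitE d rho k = rho k.
Proof. intro H; unfold splitE; rewrite (proj2 (Nat.ltb_lt _ _) H); auto. Qed.
Lemma splitE_eq d rho : splitE d rho d = p1 (rho d).
Proof. unfold splitE; rewrite Nat.ltb_irrefl, Nat.eqb_refl; auto. Qed.
Lemma splitE_S d rho : splitE d rho (S d) = p2 (rho d).
Proof.
  unfold splitE; rewrite (proj2 (Nat.ltb_ge _ _)) by lia; rewrite (proj2 (Nat.eqb_neq _ _)) by lia.
  rewrite Nat.eqb_refl; auto.
Qed.
Lemma splitE_gt d rho k : S d < k -> splitE d rho k = rho (pred k).
Proof.
  intro H; unfold splitE; rewrite (proj2 (Nat.ltb_ge _ _)) by lia; rewrite (proj2 (Nat.eqb_neq _ _)) by lia.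
  rewrite (proj2 (Nat.eqb_neq _ _)) by lia; auto.
Qed.

Lemma envT_tops N : forall d rho, envT (tops N d) rho = dsplit N d rho.
Proof.
  induction N as [|N IH]; intros d rho; simpl.
  - apply functional_extensionality; intro k; unfold insS, dsplit.
    destruct (Nat.ltb_spec k d); auto. simpl. f_equal; lia.
  - rewrite IH. apply functional_extensionality; intro k; unfold dsplit.
    destruct (Nat.ltb_spec k (S d)).
    + destruct (Nat.ltb_spec k d); [apply splitE_lt; auto|].
      assert (k = d) by lia; subst. rewrite splitE_eq, Nat.sub_diag; reflexivity.
    + destruct (Nat.ltb_spec k d); [lia|].
      rewrite splitE_S.
      replace (k - d) with (S (k - S d)) by lia. simpl.
      f_equal. apply functional_extensionality; intro j. rewrite splitE_gt by lia. reflexivity.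
Qed.

Lemma envT_dec N c e : envT (tops N 0) (scons c e) = dec N c e.
Proof.
  rewrite envT_tops. apply functional_extensionality; intro k; unfold dsplit; simpl.
  rewrite Nat.sub_0_r. reflexivity.
Qed.

Variable n : nat.
Hypothesis HSn : Sigma_n_comprehension M n.

Lemma DefS f : is_sigma n f -> first_order f -> forall N e,
  X M (fun c => sat (fo_part M) nosets (dec N c e) f).
Proof.
  intros Hs Hf N e. destruct n as [|k].
  - assert (Hd : delta0 f) by (inversion Hs; auto).
    apply (compX (trans true (tops N 0) f) (trans false (tops N 0) f) Tsets e).
    + apply trans_sig, sig_pi, pi_0; auto.
    + apply trans_pi, pi_sig, sig_0; auto.
    + apply TX.
    + intro x; rewrite sat_trans, envT_dec; apply sat_fo_sets; auto.
    + intro x; rewrite sat_trans, envT_dec; apply sat_fo_sets; auto.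
  - assert (H := HSn (trans true (tops N 0) f) (trans_fo _ _ _ Hf) (trans_sig _ _ _ Hs) e).
    match goal with |- X M ?P => replace P with (fun x => sat (fo_part M) nosets (scons x e) (trans true (tops N 0) f)); auto end.
    apply functional_extensionality; intro x; apply propositional_extensionality.
    rewrite sat_trans, envT_dec; tauto.
Qed.

Lemma DefW f : is_sigma n f -> first_order f -> forall N W e, inX W ->
  X M (fun i => sat (fo_part M) nosets (dec N (W i) e) f).
Proof.
  intros Hs Hf N W e HW. apply (X_preim (fun c => sat (fo_part M) nosets (dec N c e) f)); auto.
  apply DefS; auto.
Qed.

Variable U : (carr M -> Prop) -> Prop.
Hypothesis HU : ultrafilter_on M U.
Hypothesis Hcof : forall A, U A -> cofinal M A.

Lemma U_X A : U A -> X M A.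
Proof. apply HU. Qed.
Lemma U_T : U (fun _ => True).
Proof. apply HU. Qed.
Lemma U_int A B : U A -> U B -> U (fun x => A x /\ B x).
Proof. apply HU. Qed.
Lemma U_up A B : U A -> X M B -> (forall x, A x -> B x) -> U B.
Proof. apply HU. Qed.
Lemma U_dich A : X M A -> U A \/ U (fun x => ~ A x).
Proof. apply HU. Qed.
Lemma U_ne A : U A -> exists x, A x.
Proof. intro H; destruct (Hcof A H 𝟘) as [a [Ha _]]; eauto. Qed.
Lemma U_not A : X M A -> (U (fun x => ~ A x) <-> ~ U A).
Proof.
  intro HA; split.
  - intros H1 H2. destruct (U_ne _ (U_int _ _ H1 H2)) as [x [Hx1 Hx2]]; auto.
  - intro H; destruct (U_dich A HA); tauto.
Qed.
Lemma U_ext A B : U A -> (forall x, A x <-> B x) -> U B.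
Proof.
  intros H E. replace B with A; auto.
  apply functional_extensionality; intro; apply propositional_extensionality; auto.
Qed.

Definition UP := restricted_ultrapower M U.
Definition cE (e : nat -> carr M) : nat -> carr M -> carr M := fun k => const_fun M (e k).

Fixpoint decU (N : nat) (W : carr M -> carr M) (E : nat -> carr M -> carr M) : nat -> carr M -> carr M :=
  match N with 0 => E | S N => scons (fun i => p1 (W i)) (decU N (fun i => p2 (W i)) E) end.

Lemma decU_at N : forall W e k i, decU N W (cE e) k i = dec N (W i) e k.
Proof.
  induction N as [|N IH]; intros W e k i; simpl; [reflexivity|].
  destruct k; simpl; [reflexivity| apply (IH (fun i => p2 (W i)))].
Qed.

Lemma teval_UP rho t i : teval UP rho t i = teval (fo_part M) (fun k => rho k i) t.
Proof. induction t; simpl; try rewrite IHt1, IHt2; reflexivity. Qed.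

Lemma teval_decU N W e t i : teval UP (decU N W (cE e)) t i = teval (fo_part M) (dec N (W i) e) t.
Proof.
  rewrite teval_UP. f_equal. apply functional_extensionality; intro k; apply decU_at.
Qed.

Lemma decU_cons N f W E : decU (S N) (fun i => pr (f i) (W i)) E = scons f (decU N W E).
Proof.
  simpl. replace (fun i => p1 (pr (f i) (W i))) with f
    by (apply functional_extensionality; intro; rewrite p1_pr; auto).
  replace (fun i => p2 (pr (f i) (W i))) with W
    by (apply functional_extensionality; intro; rewrite p2_pr; auto).
  reflexivity.
Qed.

Lemma dec_cons N a b e : dec (S N) (pr a b) e = scons a (dec N b e).
Proof. simpl; rewrite p1_pr, p2_pr; auto. Qed.

Definition SS (f : form) N W e : carr M -> Prop := fun i => sat (fo_part M) nosets (dec N (W i) e) f.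
Definition Los (f : form) : Prop := forall N W e, inX W ->
  (sat UP nosets (decU N W (cE e)) f <-> U (SS f N W e)).
Definition DW (f : form) : Prop := forall N W e, inX W -> X M (SS f N W e).

Lemma DW_of f : is_sigma n f -> first_order f -> DW f.
Proof. intros; intros N W e HW; apply DefW; auto. Qed.

Lemma los_eq a b : Los (Eq a b).
Proof.
  intros N W e HW; simpl; split; intro H; eapply U_ext; eauto; intro i; simpl; rewrite !teval_decU; tauto.
Qed.
Lemma los_lt a b : Los (Lt a b).
Proof.
  intros N W e HW; simpl; split; intro H; eapply U_ext; eauto; intro i; simpl; rewrite !teval_decU; tauto.
Qed.

Lemma los_not p : DW p -> Los p -> Los (Not p).
Proof.
  intros Dp Lp N W e HW; simpl. rewrite (Lp N W e HW).
  unfold SS; simpl. rewrite (U_not _ (Dp N W e HW)). tauto.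
Qed.

Lemma los_and p q : DW p -> DW q -> Los p -> Los q -> Los (And p q).
Proof.
  intros Dp Dq Lp Lq N W e HW; simpl. rewrite (Lp N W e HW), (Lq N W e HW). unfold SS; simpl. split.
  - intros [H1 H2]; apply U_int; auto.
  - intros H; split; [apply (U_up _ _ H (Dp N W e HW)) | apply (U_up _ _ H (Dq N W e HW))];
      intros x [Hx1 Hx2]; auto.
Qed.

Lemma los_or p q : DW p -> DW q -> DW (Or p q) -> Los p -> Los q -> Los (Or p q).
Proof.
  intros Dp Dq Dpq Lp Lq N W e HW; simpl. rewrite (Lp N W e HW), (Lq N W e HW). split.
  - intros [H|H]; apply (U_up _ _ H (Dpq N W e HW)); unfold SS; simpl; tauto.
  - intros H. apply NNPP; intro Hn.
    assert (H1 : U (fun x => ~ SS p N W e x)) by (apply U_not; [apply Dp; auto| tauto]).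
    assert (H2 : U (fun x => ~ SS q N W e x)) by (apply U_not; [apply Dq; auto| tauto]).
    destruct (U_ne _ (U_int _ _ H (U_int _ _ H1 H2))) as [x [Hx [Hx1 Hx2]]].
    unfold SS in *; simpl in Hx; tauto.
Qed.

Lemma los_imp p q : DW p -> DW q -> DW (Imp p q) -> Los p -> Los q -> Los (Imp p q).
Proof.
  intros Dp Dq Dpq Lp Lq N W e HW; simpl. rewrite (Lp N W e HW), (Lq N W e HW). split.
  - intros H. destruct (classic (U (SS p N W e))) as [Hp|Hp].
    + eapply U_up; [apply H; auto| apply Dpq; auto|]; unfold SS; simpl; tauto.
    + apply U_not in Hp; [|apply Dp; auto].
      eapply U_up; [exact Hp| apply Dpq; auto|]; unfold SS; simpl; tauto.
  - intros H Hp. eapply U_up; [apply (U_int _ _ H Hp)| apply Dq; auto|]. unfold SS; simpl; tauto.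
Qed.

Lemma X_idc : inX (fun c => c).
Proof. exact X_id. Qed.

Lemma DS_R p (Dp : DW p) N e : X M (fun c => sat (fo_part M) nosets (dec N c e) p).
Proof. exact (Dp N (fun c => c) e X_id). Qed.

Lemma los_ex p : DW p -> DW (Ex p) -> Los p -> Los (Ex p).
Proof.
  intros Dp Dq Lp N W e HW. simpl. split.
  - intros [f [Hf H]]. rewrite <- decU_cons in H.
    apply (Lp (S N) _ e (X_pair _ _ Hf HW)) in H.
    eapply U_up; [exact H| apply Dq; auto|]. unfold SS; intros i Hi; simpl.
    rewrite dec_cons in Hi. exists (f i); split; auto.
  - intros H.
    destruct (skolem _ (fun c => sat (fo_part M) nosets (dec (S N) c e) p) W (Dq N W e HW) (DS_R p Dp (S N) e) HW)
      as [h [Hh1 Hh2]].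
    + intros i [y [_ Hy]]. exists y. rewrite dec_cons; auto.
    + exists h; split; auto. rewrite <- decU_cons. apply (Lp (S N) _ e (X_pair _ _ Hh1 HW)).
      eapply U_up; [exact H| apply Dp; apply X_pair; auto |]. intros i Hi; apply Hh2; auto.
Qed.

Lemma los_all p : DW p -> DW (All p) -> Los p -> Los (All p).
Proof.
  intros Dp Dq Lp N W e HW. simpl. split.
  - intros H. apply NNPP; intro Hn. apply U_not in Hn; [|apply Dq; auto].
    destruct (skolem _ (fun c => ~ sat (fo_part M) nosets (dec (S N) c e) p) W
      (X_compl _ (Dq N W e HW)) (X_compl _ (DS_R p Dp (S N) e)) HW) as [h [Hh1 Hh2]].
    + intros i Hi. apply NNPP; intro H'. apply Hi. unfold SS; simpl. intros y _.
      apply NNPP; intro Hy. apply H'. exists y. rewrite dec_cons; auto.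
    + assert (Hp := H h Hh1). rewrite <- decU_cons in Hp.
      apply (Lp (S N) _ e (X_pair _ _ Hh1 HW)) in Hp.
      destruct (U_ne _ (U_int _ _ Hp Hn)) as [i [Hi1 Hi2]]. apply (Hh2 i Hi2). exact Hi1.
  - intros H f Hf. rewrite <- decU_cons. apply (Lp (S N) _ e (X_pair _ _ Hf HW)).
    eapply U_up; [exact H| apply Dp; apply X_pair; auto |]. unfold SS; simpl; intros i Hi.
    simpl; rewrite p1_pr, p2_pr. apply Hi; auto.
Qed.

Lemma Los_iff f g : (forall S s rho, sat S s rho f <-> sat S s rho g) -> Los g -> Los f.
Proof.
  intros E Lg N W e HW. rewrite E, (Lg N W e HW). split; intro H; eapply U_ext; eauto; intro i; unfold SS; rewrite E; tauto.
Qed.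

Lemma DW_iff f g : (forall s rho, sat (fo_part M) s rho f <-> sat (fo_part M) s rho g) -> DW f -> DW g.
Proof.
  intros E Df N W e HW. specialize (Df N W e HW).
  replace (SS g N W e) with (SS f N W e); auto.
  apply functional_extensionality; intro i; apply propositional_extensionality; unfold SS; apply E.
Qed.

Lemma los : forall f, is_sigma n f -> first_order f -> Los f.
Proof.
  induction f; intros Hs Hf.
  - apply los_eq.
  - apply los_lt.
  - simpl in Hf; contradiction.
  - assert (Hd : delta0 (Not f)) by (apply (d0_of n); auto; intros ? ?; discriminate).
    inversion Hd; subst. apply los_not; [apply DW_of|apply IHf]; auto using d0_sig.
  - assert (Hd : delta0 (And f1 f2)) by (apply (d0_of n); auto; intros ? ?; discriminate).
    inversion Hd; subst. simpl in Hf; destruct Hf.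
    apply los_and; [apply DW_of|apply DW_of|apply IHf1|apply IHf2]; auto using d0_sig.
  - assert (Hd : delta0 (Or f1 f2)) by (apply (d0_of n); auto; intros ? ?; discriminate).
    inversion Hd; subst. simpl in Hf; destruct Hf.
    apply los_or; [apply DW_of|apply DW_of|apply DW_of|apply IHf1|apply IHf2]; simpl; auto using d0_sig.
  - assert (Hd : delta0 (Imp f1 f2)) by (apply (d0_of n); auto; intros ? ?; discriminate).
    inversion Hd; subst. simpl in Hf; destruct Hf.
    apply los_imp; [apply DW_of|apply DW_of|apply DW_of|apply IHf1|apply IHf2]; simpl; auto using d0_sig.
  - destruct (inv_q n f) as [I1 _]. simpl in Hf.
    apply los_ex; [apply DW_of|apply DW_of|apply IHf]; auto.
  - destruct (inv_q n f) as [_ [_ [I3 _]]]. simpl in Hf.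
    apply los_all; [apply DW_of|apply DW_of|apply IHf]; auto.
  - assert (Hd : delta0 (BEx t f)) by (apply (d0_of n); auto; intros ? ?; discriminate).
    inversion Hd; subst. simpl in Hf.
    assert (Hd' : delta0 (And (Lt (Var 0) (trename S t)) f)) by (repeat constructor; auto).
    apply (Los_iff _ _ (fun S s rho => sat_BEx S s rho t f)).
    apply los_ex.
    + apply DW_of; simpl; auto using d0_sig.
    + apply (DW_iff (BEx t f)); [intros; apply sat_BEx| apply DW_of; simpl; auto using d0_sig].
    + apply los_and; [apply DW_of| apply DW_of | apply los_lt | apply IHf]; simpl; auto using d0_sig.
      apply d0_sig; constructor.
  - assert (Hd : delta0 (BAll t f)) by (apply (d0_of n); auto; intros ? ?; discriminate).
    inversion Hd; subst. simpl in Hf.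
    assert (Hd' : delta0 (Imp (Lt (Var 0) (trename S t)) f)) by (repeat constructor; auto).
    apply (Los_iff _ _ (fun S s rho => sat_BAll S s rho t f)).
    apply los_all.
    + apply DW_of; simpl; auto using d0_sig.
    + apply (DW_iff (BAll t f)); [intros; apply sat_BAll| apply DW_of; simpl; auto using d0_sig].
    + apply los_imp; [apply DW_of| apply DW_of | apply DW_of | apply los_lt | apply IHf]; simpl; auto using d0_sig.
      apply d0_sig; constructor.
Qed.

Fixpoint appc (m : nat) (v w : carr M) : carr M :=
  match m with 0 => w | S m => pr (p1 v) (appc m (p2 v) w) end.

Lemma dec_app m : forall N v w e, dec (m + N) (appc m v w) e = dec m v (dec N w e).
Proof.
  induction m as [|m IH]; intros N v w e; simpl; auto.
  rewrite p1_pr, p2_pr, IH; auto.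
Qed.

Lemma decU_app m : forall N V W E,
  decU (m + N) (fun i => appc m (V i) (W i)) E = decU m V (decU N W E).
Proof.
  induction m as [|m IH]; intros N V W E; simpl; auto.
  replace (fun i => p1 (pr (p1 (V i)) (appc m (p2 (V i)) (W i)))) with (fun i => p1 (V i))
    by (apply functional_extensionality; intro; rewrite p1_pr; auto).
  replace (fun i => p2 (pr (p1 (V i)) (appc m (p2 (V i)) (W i)))) with (fun i => appc m (p2 (V i)) (W i))
    by (apply functional_extensionality; intro; rewrite p2_pr; auto).
  rewrite (IH N (fun i => p2 (V i))). reflexivity.
Qed.

Lemma X_appc m : forall V W, inX V -> inX W -> inX (fun i => appc m (V i) (W i)).
Proof.
  induction m as [|m IH]; intros V W HV HW; simpl; auto.
  apply (X_pair (fun i => p1 (V i)) (fun i => appc m (p2 (V i)) (W i))).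
  - apply X_p1; auto.
  - apply (IH (fun i => p2 (V i))); auto. apply X_p2; auto.
Qed.

Lemma Allm_UP m : forall c rho, sat UP nosets rho (Allm m c) ->
  forall V, inX V -> sat UP nosets (decU m V rho) c.
Proof.
  induction m as [|m IH]; intros c rho H V HV; simpl in *; auto.
  assert (H1 := IH (All c) rho H (fun i => p2 (V i)) (X_p2 _ HV)). simpl in H1.
  apply (H1 (fun i => p1 (V i)) (X_p1 _ HV)).
Qed.

Lemma Allm_M m : forall c rho, (forall v, sat (fo_part M) nosets (dec m v rho) c) ->
  sat (fo_part M) nosets rho (Allm m c).
Proof.
  induction m as [|m IH]; intros c rho H; simpl in *; auto.
  apply IH. intros v x _. assert (Hx := H (pr x v)). simpl in Hx. rewrite p1_pr, p2_pr in Hx; auto.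
Qed.

Lemma down_pi psi : is_pi (S n) psi -> first_order psi -> forall N W e, inX W ->
  sat UP nosets (decU N W (cE e)) psi -> exists i, sat (fo_part M) nosets (dec N (W i) e) psi.
Proof.
  intros Hp Hf N W e HW H. destruct (pi_decomp _ _ Hp) as [m [c [-> Hc]]].
  apply fo_Allm in Hf.
  apply NNPP; intro Hn.
  assert (Hv : forall i, exists v, ~ sat (fo_part M) nosets (dec m v (dec N (W i) e)) c).
  { intro i. apply NNPP; intro H1. apply Hn. exists i. apply Allm_M. intro v.
    apply NNPP; intro H2. apply H1; eauto. }
  set (R := fun z => ~ sat (fo_part M) nosets (dec m (p1 z) (dec N (p2 z) e)) c).
  assert (HR : X M R).
  { apply X_compl.
    assert (HX := DefW c Hc Hf (m + N) (fun z => appc m (p1 z) (p2 z)) e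
      (X_appc m (fun z => p1 z) (fun z => p2 z) (X_p1 _ X_id) (X_p2 _ X_id))).
    match goal with |- X M ?P => replace P with (fun i => sat (fo_part M) nosets (dec (m + N) (appc m (p1 i) (p2 i)) e) c); auto end.
    apply functional_extensionality; intro z; rewrite dec_app; auto. }
  destruct (skolem (fun _ => True) R W HT HR HW) as [V [HV1 HV2]].
  - intros i _. destruct (Hv i) as [v Hv']. exists v. unfold R; rewrite p1_pr, p2_pr; auto.
  - assert (H1 := Allm_UP m c _ H V HV1). rewrite <- decU_app in H1.
    apply (los c Hc Hf (m + N) _ e (X_appc m V W HV1 HW)) in H1.
    destruct (U_ne _ H1) as [i Hi]. unfold SS in Hi. rewrite dec_app in Hi.
    assert (Hr := HV2 i I). unfold R in Hr. rewrite p1_pr, p2_pr in Hr. auto.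
Qed.

Lemma down_sig f : is_sigma (S (S n)) f -> first_order f -> forall N W e, inX W ->
  sat UP nosets (decU N W (cE e)) f -> exists i, sat (fo_part M) nosets (dec N (W i) e) f.
Proof.
  induction f; intros Hs Hf N W e HW H;
    try (apply down_pi; auto; apply sig_nonEx; auto; intros ? ?; discriminate).
  destruct (inv_q (S (S n)) f) as [I1 _]. simpl in Hf.
  destruct H as [g [Hg H]]. rewrite <- decU_cons in H.
  destruct (IHf (I1 Hs) Hf (S N) _ e (X_pair _ _ Hg HW) H) as [i Hi].
  exists i. simpl in Hi. rewrite p1_pr, p2_pr in Hi. exists (g i); split; [exact I | auto].
Qed.

Lemma up_pi psi : is_pi (S n) psi -> first_order psi -> forall N W e, inX W ->
  (forall i, sat (fo_part M) nosets (dec N (W i) e) psi) -> sat UP nosets (decU N W (cE e)) psi.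
Proof.
  assert (Base : forall ps, is_sigma n ps -> first_order ps -> forall N W e, inX W ->
    (forall i, sat (fo_part M) nosets (dec N (W i) e) ps) -> sat UP nosets (decU N W (cE e)) ps).
  { intros ps Hs Hf N W e HW H. apply (los ps Hs Hf N W e HW).
    apply (U_up _ _ U_T (DefW ps Hs Hf N W e HW)). intros i _; apply H. }
  induction psi; intros Hp Hf N W e HW H;
    try (apply Base; auto; apply pi_nonAll; auto; intros ? ?; discriminate).
  destruct (inv_q (S n) psi) as [_ [_ [_ I4]]]. simpl in Hf.
  simpl. intros g Hg. rewrite <- decU_cons.
  apply (IHpsi (I4 Hp) Hf (S N) _ e (X_pair _ _ Hg HW)).
  intro i. simpl. rewrite p1_pr, p2_pr. apply (H i); exact I.
Qed.

Lemma cE_cons x e : cE (scons x e) = scons (const_fun M x) (cE e).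
Proof. apply functional_extensionality; intros [|k]; reflexivity. Qed.

Lemma up_sig f : is_sigma (S (S n)) f -> first_order f -> forall e,
  sat (fo_part M) nosets e f -> sat UP nosets (cE e) f.
Proof.
  induction f; intros Hs Hf e H;
    try (apply (up_pi _ (sig_nonEx _ _ Hs ltac:(intros ? ?; discriminate)) Hf 0 (fun _ => 𝟘) e (X_const 𝟘));
         intro i; exact H).
  destruct (inv_q (S (S n)) f) as [I1 _]. simpl in Hf.
  destruct H as [x [_ Hx]]. exists (const_fun M x); split; [apply X_const|].
  rewrite <- cE_cons. apply IHf; auto.
Qed.

End Arith.

Theorem corollary3p7 (M : model2) (U : (carr M -> Prop) -> Prop) (n : nat) :
  RCA0 M ->
  ultrafilter_on M U ->
  (forall A, U A -> cofinal M A) ->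
  Sigma_n_comprehension M n ->
  forall phi : form, first_order phi -> is_sigma (n + 2) phi ->
  forall e : nat -> carr M,
    sat (fo_part M) nosets e phi <->
    sat (restricted_ultrapower M U) nosets (fun k => const_fun M (e k)) phi.
Proof.
  intros [HQ [HI HD]] HU Hcof HSn phi Hf Hs e.
  assert (HT : X M (fun _ => True)) by (apply HU; apply HU).
  replace (n + 2) with (S (S n)) in Hs by lia.
  split.
  - intro H. apply (up_sig M HQ HI HD HT n HSn U HU Hcof phi Hs Hf e H).
  - intro H. destruct (down_sig M HQ HI HD HT n HSn U HU Hcof phi Hs Hf 0 (fun _ => zero M) e
      (X_const M HQ HI HD HT (zero M)) H) as [i Hi]. exact Hi.
Qed.
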